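(* Let $\mathcal A$ be a finitely generated group, $X$ a finite generating system, and $\mathcal K$ a cyclic subgroup of prime order. Then in the graph $\Gamma=\mathrm{Sch}(\mathcal A,\mathcal K,X)$, each orbit of $\mathrm{Aut}(\Gamma)$ on vertices is a finite union of $X$-orbits.
   Context: The Schreier graph $\mathrm{Sch}(\mathcal A,\mathcal K,X)$ has vertices the right cosets $\mathcal Kg$ and, for each coset and each $x$ with $x\in X$ or $x^{-1}\in X$, an edge labeled $x$ from $\mathcal Kg$ to $\mathcal Kgx$ whose inverse is the edge labeled $x^{-1}$ from $\mathcal Kgx$. $\mathrm{Aut}(\Gamma)$ is the group of all graph automorphisms (ignoring labels); an $X$-orbit is an orbit on vertices of the subgroup of label-preserving automorphisms. *)

(* Defs.v *)
From mathcomp Require Import all_boot.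
From Stdlib Require List FunctionalExtensionality PropExtensionality.
Set Implicit Arguments. Unset Strict Implicit. Unset Printing Implicit Defensive.

Record group := Group {
  gcar :> Type;
  gmul : gcar -> gcar -> gcar;
  gone : gcar;
  ginv : gcar -> gcar;
  gmulA : forall x y z, gmul x (gmul y z) = gmul (gmul x y) z;
  gmul1g : forall x, gmul gone x = x;
  gmulg1 : forall x, gmul x gone = x;
  gmulVg : forall x, gmul (ginv x) x = gone;
  gmulgV : forall x, gmul x (ginv x) = gone }.

Section Groups.
Variable G : group.

Definition gpow (x : G) (n : nat) : G := iter n (fun y => gmul y x) (gone G).

Definition has_order (x : G) (p : nat) : Prop :=
  0 < p /\ gpow x p = gone G /\ forall m, 0 < m < p -> gpow x m <> gone G.

Definition cyclic_sub (x : G) : G -> Prop := fun h => exists n, h = gpow x n.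

Inductive generated (X : list G) : G -> Prop :=
  | gen_one : generated X (gone G)
  | gen_mulX g x : generated X g -> List.In x X -> generated X (gmul g x)
  | gen_mulXV g x : generated X g -> List.In x X -> generated X (gmul g (ginv x)).

Definition generates (X : list G) : Prop := forall g, generated X g.

Lemma ginvK (x : G) : ginv (ginv x) = x.
Proof.
have := gmulA (ginv (ginv x)) (ginv x) x.
by rewrite gmulVg gmulg1 gmulVg gmul1g => ->.
Qed.

Definition rcoset (K : G -> Prop) (g : G) : G -> Prop :=
  fun h => exists k, K k /\ h = gmul k g.

Definition set_rmul (S : G -> Prop) (s : G) : G -> Prop :=
  fun h => exists h', S h' /\ h = gmul h' s.

Lemma rcoset_rmul K g s : set_rmul (rcoset K g) s = rcoset K (gmul g s).
Proof.
apply: FunctionalExtensionality.functional_extensionality => h.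
apply: PropExtensionality.propositional_extensionality; split.
- case=> h' [[k [Kk ->]] ->]; exists k; split=> //; by rewrite gmulA.
- case=> k [Kk ->]; exists (gmul k g); split; first by exists k.
  by rewrite gmulA.
Qed.

Section Schreier.
Variables (K : G -> Prop) (X : list G).

Definition sch_vertex := {S : G -> Prop | exists g, S = rcoset K g}.

Lemma sch_vmul_proof (v : sch_vertex) (s : G) :
  exists g, set_rmul (proj1_sig v) s = rcoset K g.
Proof.
case: v => S [g HS] /=; exists (gmul g s); rewrite HS; exact: rcoset_rmul.
Qed.

Definition sch_vmul (v : sch_vertex) (s : G) : sch_vertex :=
  exist _ (set_rmul (proj1_sig v) s) (sch_vmul_proof v s).

Definition sch_label := {s : G | List.In s X \/ List.In (ginv s) X}.

Definition label_inv (s : sch_label) : sch_label.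
Proof.
exists (ginv (proj1_sig s)); case: s => s [Hs|Hs] /=; [right; by rewrite ginvK | by left].
Defined.

Definition sch_edge := (sch_vertex * sch_label)%type.

Definition sch_origin (e : sch_edge) : sch_vertex := e.1.
Definition sch_terminus (e : sch_edge) : sch_vertex := sch_vmul e.1 (proj1_sig e.2).
Definition sch_elabel (e : sch_edge) : G := proj1_sig e.2.
Definition sch_einv (e : sch_edge) : sch_edge := (sch_terminus e, label_inv e.2).

Definition sch_aut (fV : sch_vertex -> sch_vertex) (fE : sch_edge -> sch_edge) : Prop :=
  bijective fV /\ bijective fE /\
  (forall e, sch_origin (fE e) = fV (sch_origin e)) /\
  (forall e, sch_terminus (fE e) = fV (sch_terminus e)) /\
  (forall e, sch_einv (fE e) = fE (sch_einv e)).

Definition label_preserving (fE : sch_edge -> sch_edge) : Prop :=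
  forall e, sch_elabel (fE e) = sch_elabel e.

Definition aut_orbit (v u : sch_vertex) : Prop :=
  exists fV fE, sch_aut fV fE /\ fV v = u.

Definition X_orbit (v u : sch_vertex) : Prop :=
  exists fV fE, sch_aut fV fE /\ label_preserving fE /\ fV v = u.

End Schreier.
End Groups.

(* Main.v *)
Require Import Defs.
From mathcomp Require Import all_boot zify.
From Stdlib Require List ProofIrrelevance ClassicalEpsilon ClassicalDescription FinFun
  FunctionalExtensionality PropExtensionality.
Set Implicit Arguments. Unset Strict Implicit. Unset Printing Implicit Defensive.

Section GroupLemmas.
Variable G : group.
Implicit Types x y z : G.

Lemma mulKg x y : gmul (ginv x) (gmul x y) = y.
Proof. by rewrite gmulA gmulVg gmul1g. Qed.
Lemma mulKVg x y : gmul x (gmul (ginv x) y) = y.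
Proof. by rewrite gmulA gmulgV gmul1g. Qed.
Lemma mulgK x y : gmul (gmul y x) (ginv x) = y.
Proof. by rewrite -gmulA gmulgV gmulg1. Qed.
Lemma mulgKV x y : gmul (gmul y (ginv x)) x = y.
Proof. by rewrite -gmulA gmulVg gmulg1. Qed.

Lemma gpowS x n : gpow x n.+1 = gmul (gpow x n) x.
Proof. by []. Qed.
Lemma gpow0 x : gpow x 0 = gone G.
Proof. by []. Qed.
Lemma gpowD x m n : gpow x (m + n) = gmul (gpow x m) (gpow x n).
Proof.
elim: n => [|n IH]; first by rewrite addn0 gpow0 gmulg1.
by rewrite addnS !gpowS IH gmulA.
Qed.
Lemma gpow1g n : gpow (gone G) n = gone G.
Proof. by elim: n => [|n IH] //; rewrite gpowS IH gmul1g. Qed.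
Lemma gpowM x m n : gpow x (m * n) = gpow (gpow x m) n.
Proof.
elim: n => [|n IH]; first by rewrite muln0.
by rewrite mulnS addnC gpowD IH gpowS.
Qed.
Lemma gpow_conj (n a b : G) j : gmul n a = gmul b n -> gmul n (gpow a j) = gmul (gpow b j) n.
Proof.
move=> H; elim: j => [|j IH]; first by rewrite !gpow0 gmulg1 gmul1g.
by rewrite !gpowS gmulA IH -gmulA H gmulA.
Qed.
End GroupLemmas.

Lemma set_ext (T : Type) (S1 S2 : T -> Prop) : (forall t, S1 t <-> S2 t) -> S1 = S2.
Proof.
move=> H; apply: FunctionalExtensionality.functional_extensionality => t.
exact: PropExtensionality.propositional_extensionality.
Qed.

Section Main.
Variables (A : group) (X : list A) (k : A) (p : nat).
Hypotheses (hp : prime p) (hk : has_order k p).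

Notation K := (cyclic_sub k).
Notation V := (sch_vertex K).
Notation L := (sch_label X).

Lemma vert_eq (x y : V) : proj1_sig x = proj1_sig y -> x = y.
Proof.
case: x => S hS; case: y => T hT /= E; subst T.
by rewrite (ProofIrrelevance.proof_irrelevance _ hS hT).
Qed.

Lemma vmul1 (x : V) : sch_vmul x (gone A) = x.
Proof.
apply: vert_eq => /=; apply: set_ext => t; split.
- by case=> h [Hh ->]; rewrite gmulg1.
- by move=> Ht; exists t; rewrite gmulg1.
Qed.

Lemma vmulA (x : V) a b : sch_vmul (sch_vmul x a) b = sch_vmul x (gmul a b).
Proof.
apply: vert_eq => /=; apply: set_ext => t; split.
- case=> h [[h' [Hh' ->]] ->]; exists h'; split => //; by rewrite gmulA.
- case=> h [Hh ->]; exists (gmul h a); split; first by exists h.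
  by rewrite gmulA.
Qed.

Definition fixes (x : V) (h : A) := sch_vmul x h = x.

Lemma k1 : k <> gone A.
Proof.
case: hk => p0 [_ H]; have p1 := prime_gt1 hp.
by have := H 1 (introT andP (conj (isT : 0 < 1) p1)); rewrite /gpow /= gmul1g.
Qed.

Lemma gpow_mod N : gpow k N = gpow k (N %% p).
Proof.
case: hk => _ [Hp _].
rewrite {1}(divn_eq N p) gpowD mulnC gpowM Hp gpow1g gmul1g //.
Qed.

Lemma fixes_rcoset (x : V) g h : proj1_sig x = rcoset K g -> fixes x h ->
  exists a, gmul g h = gmul (gpow k a) g.
Proof.
move=> Hx Hf.
have E : rcoset K (gmul g h) = rcoset K g.
  by rewrite -rcoset_rmul -Hx; move: (f_equal (@proj1_sig _ _) Hf).
have : rcoset K (gmul g h) (gmul g h) by exists (gone A); split; [exists 0 | rewrite gmul1g].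
rewrite E; case=> k' [[a ->] Ha]; by exists a.
Qed.

Lemma inv_exp a : gpow k a <> gone A -> exists c, forall m, gpow k m = gpow (gpow k a) (c * m).
Proof.
move=> Ha.
have am : a %% p != 0.
  apply/negP => /eqP E; apply: Ha; by rewrite gpow_mod E.
have a0 : 0 < a by case: a am Ha => [|a'] //; rewrite mod0n.
have cop : coprime a p.
  by rewrite coprime_sym prime_coprime // /dvdn.
case/(coprimeP _ a0): cop => [[u1 u2]] /= Hu.
exists u1 => m.
have E : a * u1 = u2 * p + 1.
  have : u2 * p < u1 * a by rewrite -subn_gt0 Hu.
  move: Hu; rewrite mulnC; lia.
rewrite -gpowM mulnA E gpow_mod [RHS]gpow_mod.
rewrite -modnMml modnMDl.
by rewrite (modn_small (prime_gt1 hp)) mul1n.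
Qed.

Lemma norm_step (n : A) a b : gmul n (gpow k a) = gmul (gpow k b) n -> gpow k a <> gone A ->
  forall m, exists m', gmul n (gpow k m) = gmul (gpow k m') n.
Proof.
move=> H Ha m; case: (inv_exp Ha) => c Hc.
exists (b * (c * m)); rewrite (Hc m) (gpowM k b).
exact: gpow_conj.
Qed.


Definition lmul (n : A) (S : A -> Prop) : A -> Prop :=
  fun t => exists s, S s /\ t = gmul n s.

Lemma lmulK n S : lmul (ginv n) (lmul n S) = S.
Proof.
apply: set_ext => t; split.
- by case=> s [[s' [Hs' ->]] ->]; rewrite mulKg.
- move=> Ht; exists (gmul n t); split; first by exists t.
  by rewrite mulKg.
Qed.

Lemma lmul_rmul n S s : lmul n (set_rmul S s) = set_rmul (lmul n S) s.
Proof.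
apply: set_ext => t; split.
- case=> u [[u' [Hu' ->]] ->]; exists (gmul n u'); split; first by exists u'.
  by rewrite gmulA.
- case=> u [[u' [Hu' ->]] ->]; exists (gmul u' s); split; first by exists u'.
  by rewrite gmulA.
Qed.

Definition normalizes (n : A) :=
  forall m, exists m', gmul n (gpow k m) = gmul (gpow k m') n.

Lemma lmul_rcoset n c : normalizes n -> normalizes (ginv n) ->
  lmul n (rcoset K c) = rcoset K (gmul n c).
Proof.
move=> N1 N2; apply: set_ext => t; split.
- case=> s [[k' [[m ->] ->]] ->].
  case: (N1 m) => m' Hm; exists (gpow k m'); split; first by exists m'.
  by rewrite gmulA Hm -!gmulA.
- case=> k' [[m ->] ->].
  case: (N2 m) => m' Hm.
  have E : gmul (gpow k m) n = gmul n (gpow k m').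
    by rewrite -[gpow k m](mulKVg n) -gmulA -[in RHS](mulgKV n (gpow k m')) -Hm gmulA.
  exists (gmul (gpow k m') c); split; first by exists (gpow k m'); split => //; exists m'.
  by rewrite gmulA E gmulA.
Qed.

Section Trans.
Variable n : A.
Hypotheses (N1 : normalizes n) (N2 : normalizes (ginv n)).

Lemma tV_proof (x : V) : exists g, lmul n (proj1_sig x) = rcoset K g.
Proof. case: x => S [c Hc] /=; rewrite Hc; exists (gmul n c); exact: lmul_rcoset. Qed.

Definition tV (x : V) : V := exist _ _ (tV_proof x).
Definition tE (e : sch_edge K X) : sch_edge K X := (tV e.1, e.2).
End Trans.

Lemma norm_inv n : normalizes n -> normalizes (ginv n) -> normalizes (ginv (ginv n)).
Proof. by rewrite ginvK. Qed.

Lemma trans_aut n (N1 : normalizes n) (N2 : normalizes (ginv n)) :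
  sch_aut (tV N1 N2) (tE N1 N2) /\ label_preserving (tE N1 N2).
Proof.
have N3 := norm_inv N1 N2.
have c1 : cancel (tV N1 N2) (tV N2 N3).
  by move=> x; apply: vert_eq => /=; rewrite lmulK.
have c2 : cancel (tV N2 N3) (tV N1 N2).
  by move=> x; apply: vert_eq => /=; rewrite -{1}(ginvK n) lmulK.
split; last by [].
split; first by exists (tV N2 N3).
split.
  exists (tE N2 N3); case=> x s; by rewrite /tE /= ?c1 ?c2.
have term : forall e, sch_terminus (tE N1 N2 e) = tV N1 N2 (sch_terminus e).
  by case=> x s; apply: vert_eq => /=; rewrite lmul_rmul.
split; first by [].
split; first exact: term.
case=> x s; rewrite /sch_einv term //.
Qed.


Lemma key (x y : V) h : h <> gone A -> fixes x h -> fixes y h -> X_orbit X x y.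
Proof.
move=> h1 Fx Fy.
case: (svalP x) => g Hg; case: (svalP y) => g' Hg'.
case: (fixes_rcoset Hg Fx) => a Ha.
case: (fixes_rcoset Hg' Fy) => b Hb.
have ka : gpow k a <> gone A.
  move=> E; apply: h1; move: Ha; rewrite E gmul1g => Ha.
  by rewrite -(mulKg g h) Ha gmulVg.
have kb : gpow k b <> gone A.
  move=> E; apply: h1; move: Hb; rewrite E gmul1g => Hb.
  by rewrite -(mulKg g' h) Hb gmulVg.
set n := gmul g' (ginv g).
have Ea : gpow k a = gmul (gmul g h) (ginv g) by rewrite Ha mulgK.
have Eb : gpow k b = gmul (gmul g' h) (ginv g') by rewrite Hb mulgK.
have R1 : gmul n (gpow k a) = gmul (gpow k b) n.
  rewrite Ea Eb /n -!gmulA; congr (gmul g' _).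
  by rewrite !gmulA gmulVg gmul1g mulgKV.
have R2 : gmul (ginv n) (gpow k b) = gmul (gpow k a) (ginv n).
  by rewrite -(mulKg n (gpow k a)) R1 -(gmulA (ginv n)) mulgK.
have N1 : normalizes n by exact: norm_step R1 ka.
have N2 : normalizes (ginv n) by exact: norm_step R2 kb.
case: (trans_aut N1 N2) => Ha' Hl.
exists (tV N1 N2), (tE N1 N2); split => //; split => //.
apply: vert_eq => /=; rewrite Hg lmul_rcoset // Hg' /n mulgKV //.
Qed.

Lemma aut_id : sch_aut (@id V) (@id (sch_edge K X)).
Proof.
split; first by exists id.
split; first by exists id.
by [].
Qed.

Lemma aut_comp fV fE gV gE : sch_aut fV fE -> sch_aut gV gE ->
  sch_aut (K:=K) (X:=X) (gV \o fV) (gE \o fE).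
Proof.
case=> bf [bfe [o1 [t1 i1]]]; case=> bg [bge [o2 [t2 i2]]].
split; first exact: bij_comp.
split; first exact: bij_comp.
split; first by move=> e /=; rewrite o2 o1.
split; first by move=> e /=; rewrite t2 t1.
by move=> e /=; rewrite i2 i1.
Qed.


Definition dec_eq (T : Type) : forall x y : T, {x = y} + {x <> y} :=
  fun x y => ClassicalDescription.excluded_middle_informative (x = y).

Definition decb (P : Prop) : bool :=
  if ClassicalDescription.excluded_middle_informative P then true else false.

Lemma decbP (P : Prop) : decb P = true <-> P.
Proof. by rewrite /decb; case: ClassicalDescription.excluded_middle_informative. Qed.

Definition lab_of (s : A) : list L :=
  match ClassicalDescription.excluded_middle_informative (List.In s X \/ List.In (ginv s) X) with
  | left h => [:: exist _ s h]
  | right _ => [::]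
  end.

Definition labs : list L :=
  List.nodup (@dec_eq L) (List.flat_map (fun x => lab_of x ++ lab_of (ginv x)) X).

Lemma lab_of_in (l : L) : List.In l (lab_of (sval l)).
Proof.
rewrite /lab_of; case: ClassicalDescription.excluded_middle_informative => H.
  left; case: l H => s hs /= H; by rewrite (ProofIrrelevance.proof_irrelevance _ H hs).
by case: l H => s hs /= H; case: (H hs).
Qed.

Lemma labs_all (l : L) : List.In l labs.
Proof.
rewrite /labs List.nodup_In List.in_flat_map.
case: l => s hs; have [H|H] := hs.
- exists s; split => //; apply: List.in_or_app; left; exact: (lab_of_in (exist _ s hs : L)).
- exists (ginv s); split => //; apply: List.in_or_app; right; rewrite ginvK.
  exact: (lab_of_in (exist _ s hs : L)).
Qed.

Fixpoint words (n : nat) : list (list L) :=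
  match n with
  | 0 => [:: [::]]
  | n'.+1 => List.flat_map (fun s => List.map (cons s) (words n')) labs
  end.

Lemma in_words (w : list L) : List.In w (words (size w)).
Proof.
elim: w => [|s w IH] /=; first by left.
apply/List.in_flat_map; exists s; split; first exact: labs_all.
by apply: List.in_map.
Qed.

Lemma words_size n w : List.In w (words n) -> size w = n.
Proof.
elim: n w => [|n IH] w /=; first by case=> // <-.
case/List.in_flat_map => s [_ /List.in_map_iff [w' [<- Hw']]] /=.
by rewrite (IH _ Hw').
Qed.

Lemma NoDup_flat_map (T U : Type) (f : T -> list U) (l : list T) :
  List.NoDup l -> (forall s, List.NoDup (f s)) ->
  (forall s s' u, List.In u (f s) -> List.In u (f s') -> s = s') ->
  List.NoDup (List.flat_map f l).
Proof.
move=> Hl Hf Hd; elim: l Hl => [|a l IH] Hl /=; first by constructor.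
inversion Hl; subst.
apply: List.NoDup_app; [exact: Hf | exact: IH |].
move=> u Hu /List.in_flat_map [s [Hs Hu']].
by have E := Hd _ _ _ Hu Hu'; subst s.
Qed.

Lemma NoDup_words n : List.NoDup (words n).
Proof.
elim: n => [|n IH] /=; first by constructor; [case | constructor].
apply: NoDup_flat_map.
- exact: List.NoDup_nodup.
- move=> s; apply: FinFun.Injective_map_NoDup; last exact: IH.
  by move=> w w' [E].
- by move=> s1 s2 u /List.in_map_iff [w [<- _]] /List.in_map_iff [w2 [[->] _]].
Qed.

Definition prod (w : list L) : A := foldr (fun s acc => gmul (sval s) acc) (gone A) w.

Fixpoint endv (x : V) (w : list L) : V :=
  match w with
  | [::] => x
  | s :: w' => endv (sch_vmul x (sval s)) w'
  end.

Lemma endv_prod x w : endv x w = sch_vmul x (prod w).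
Proof.
elim: w x => [|s w IH] x /=; first by rewrite vmul1.
by rewrite IH vmulA.
Qed.

Section Phi.
Variables (fV : V -> V) (fE : sch_edge K X -> sch_edge K X).
Hypothesis Ha : sch_aut fV fE.

Fixpoint Phi (x : V) (w : list L) : list L :=
  match w with
  | [::] => [::]
  | s :: w' => (fE (x, s)).2 :: Phi (sch_vmul x (sval s)) w'
  end.

Lemma Phi_size x w : size (Phi x w) = size w.
Proof. by elim: w x => [|s w IH] x //=; rewrite IH. Qed.

Lemma Phi_end x w : endv (fV x) (Phi x w) = fV (endv x w).
Proof.
case: Ha => _ [_ [Ho [Ht _]]].
elim: w x => [|s w IH] x //=.
rewrite -IH; congr endv.
have := Ht (x, s); rewrite /sch_terminus /= => <-.
by have := Ho (x, s); rewrite /sch_origin /= => <-.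
Qed.

Lemma Phi_inj x : FinFun.Injective (Phi x).
Proof.
case: Ha => _ [bE [Ho _]].
move=> w; elim: w x => [|s w IH] x [|s' w'] //= [E1 E2].
have E : fE (x, s) = fE (x, s').
  move: (Ho (x, s)) (Ho (x, s')); rewrite /sch_origin /=.
  case: (fE (x, s)) E1 => a b; case: (fE (x, s')) => a' b' /= -> -> -> //.
have Es : s = s' by case: (bij_inj bE E).
subst s'; by rewrite (IH _ _ E2).
Qed.
End Phi.


Lemma count_key fV (fE : sch_edge K X -> sch_edge K X) (v u : V) (Ha : sch_aut fV fE) (Hu : fV v = u) (w0 : list L)
  (Hh0 : prod w0 <> gone A) (Fv : fixes v (prod w0)) :
  exists w, List.In w (words (size w0)) /\ fixes u (prod w) /\ prod w <> gone A.
Proof.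
apply: Classical_Prop.NNPP => Hn.
have Hc : forall w, List.In w (words (size w0)) -> fixes u (prod w) -> prod w = gone A.
  move=> w Hw Fw; apply: Classical_Prop.NNPP => Hw1; apply: Hn; by exists w.
set W := words (size w0).
set Cv := List.filter (fun w => decb (fixes v (prod w))) W.
set T := List.filter (fun w => decb (prod w = gone A)) W.
have l1 : (length Cv <= length T)%coq_nat.
  rewrite -(List.length_map (Phi fE v)).
  apply: List.NoDup_incl_length.
    apply: FinFun.Injective_map_NoDup; first exact: (Phi_inj Ha).
    apply: List.NoDup_filter; exact: NoDup_words.
  move=> y /List.in_map_iff [w [<- /List.filter_In [Hw /decbP Fw]]].
  have HW : List.In (Phi fE v w) W.
    by rewrite /W -(words_size Hw) -(Phi_size fE v w); exact: in_words.
  apply/List.filter_In; split => //; apply/decbP; apply: Hc => //.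
  rewrite /fixes -endv_prod -Hu (Phi_end Ha) endv_prod Fw //.
have l2 : (length (w0 :: T) <= length Cv)%coq_nat.
  apply: List.NoDup_incl_length.
    constructor.
      by move/List.filter_In => [_ /decbP].
    apply: List.NoDup_filter; exact: NoDup_words.
  move=> y [<-|/List.filter_In [Hw /decbP Hy]]; apply/List.filter_In.
    split; first exact: in_words.
    by apply/decbP.
  split => //; apply/decbP; by rewrite /fixes Hy vmul1.
move: l1 l2 => /= ; lia.
Qed.

Lemma word_of (g : A) : generated X g -> exists w : list L, prod w = g.
Proof.
elim => [|g' x _ [w Hw] Hx|g' x _ [w Hw] Hx].
- by exists [::].
- exists (w ++ [:: exist _ x (or_introl Hx)]).
  rewrite -Hw /prod foldr_cat /= gmulg1.
  elim: w {Hw} => [|s w IH] /=; first by rewrite gmul1g.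
  by rewrite IH gmulA.
- have H' : List.In (ginv x) X \/ List.In (ginv (ginv x)) X by right; rewrite ginvK.
  exists (w ++ [:: exist _ (ginv x) H']).
  rewrite -Hw /prod foldr_cat /= gmulg1.
  elim: w {Hw} => [|s w IH] /=; first by rewrite gmul1g.
  by rewrite IH gmulA.
Qed.

Lemma main (hX : generates X) (v : V) :
  exists ws : list V, forall u : V, aut_orbit X v u <-> exists w, List.In w ws /\ X_orbit X w u.
Proof.
case: (svalP v) => g Hg.
set h0 := gmul (ginv g) (gmul k g).
case: (word_of (hX h0)) => w0 Hw0.
have Hh0 : prod w0 <> gone A.
  rewrite Hw0 /h0 => E; apply: k1.
  by rewrite -(mulgK g k) -(mulKVg g (gmul k g)) E gmulg1 gmulgV.
have Fv : fixes v (prod w0).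
  apply: vert_eq; rewrite /= Hg rcoset_rmul Hw0 /h0 mulKVg.
  apply: set_ext => t; split.
  - case=> k' [[m ->] ->]; exists (gmul (gpow k m) k); split; first by exists m.+1.
    by rewrite gmulA.
  - case=> k' [[m ->] ->]; exists (gpow k (m + p.-1)); split; first by exists (m + p.-1).
    case: hk => p0 [Hp _].
    rewrite gmulA -gpowS -addnS prednK // gpowD Hp gmulg1 //.

pose pick (w : list L) : V :=
  match ClassicalDescription.excluded_middle_informative
          (exists z, aut_orbit X v z /\ fixes z (prod w) /\ prod w <> gone A) with
  | left h => proj1_sig (ClassicalEpsilon.constructive_indefinite_description _ h)
  | right _ => v
  end.
have Hpick : forall w, aut_orbit X v (pick w).
  move=> w; rewrite /pick; case: ClassicalDescription.excluded_middle_informative => H.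
    exact: (proj1 (proj2_sig (ClassicalEpsilon.constructive_indefinite_description _ H))).
  by exists id, id; split => //; exact: aut_id.
exists (List.map pick (words (size w0))) => u; split.
- case=> fV [fE [Ha Hu]].
  case: (count_key Ha Hu Hh0 Fv) => w [Hw [Fu Hw1]].
  exists (pick w); split; first exact: List.in_map.
  rewrite /pick; case: ClassicalDescription.excluded_middle_informative => H.
    have [_ [Fz _]] := proj2_sig (ClassicalEpsilon.constructive_indefinite_description _ H).
    exact: (key Hw1 Fz Fu).
  by case: H; exists u; split => //; exists fV, fE.
- case=> w [/List.in_map_iff [w' [<- _]] [gV [gE [Hga [_ Hgu]]]]].
  case: (Hpick w') => fV [fE [Ha Hv]].
  exists (gV \o fV), (gE \o fE); split; first exact: aut_comp.
  by rewrite /= Hv.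
Qed.

End Main.

Theorem proposition6p6 (A : group) (X : list A) (hX : generates X)
    (p : nat) (hp : prime p) (k : A) (hk : has_order k p) :
  forall v : sch_vertex (cyclic_sub k),
    exists ws : list (sch_vertex (cyclic_sub k)),
      forall u : sch_vertex (cyclic_sub k),
        aut_orbit X v u <-> exists w, List.In w ws /\ X_orbit X w u.
Proof. move=> v; exact: (main hp hk hX v). Qed.
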